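(* Let $n\ge2$ and let $\sigma$ be a $*$-representation of $\mathcal{E}_n$ on $\mathcal{H}$ with generators $S_i=\sigma(\mathfrak{s}_i)$. Then $S=(S_1,\dots,S_n)$ has a wandering vector if and only if there exists $X\in\mathcal{X}(\sigma)$ which is bounded below.
   Context: $\mathcal{E}_n$ is the universal C*-algebra generated by isometries $\mathfrak{s}_1,\dots,\mathfrak{s}_n$ with pairwise orthogonal ranges. A vector $\eta\in\mathcal{H}$ is wandering if $\{S_w\eta:w\in\mathbb{F}_n^+\}$ is orthonormal, where $\mathbb{F}_n^+$ is the free semigroup on $n$ letters and $S_w=S_{i_1}\cdots S_{i_k}$ for $w=i_1\cdots i_k$. $L_i$ are the left creation operators $L_i\xi_w=\xi_{iw}$ on the Fock space $\ell^2(\mathbb{F}_n^+)$. $\mathcal{X}(\sigma)$ is the set of bounded $X:\ell^2(\mathbb{F}_n^+)\to\mathcal{H}$ with $S_iX=XL_i$ for $1\le i\le n$. *)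

(* Defs.v *)
From HB Require Import structures.
From mathcomp Require Import all_boot all_algebra.
From mathcomp Require Import all_classical all_reals all_analysis.
From mathcomp Require Import complex.
Set Implicit Arguments. Unset Strict Implicit. Unset Printing Implicit Defensive.
Import GRing.Theory Num.Theory.
Local Open Scope ring_scope.

(* Complex numbers over a real type R : R[i].  Inner products are linear in
   the first variable and conjugate-linear in the second. *)

Definition csq (R : realType) (z : R[i]) : R :=
  (complex.Re z) ^+ 2 + (complex.Im z) ^+ 2.

Record hilbert (R : realType) (H : lmodType R[i]) := Hilbert {
  ip : H -> H -> R[i];
  ip_linl : forall (a : R[i]) (x y z : H), ip (a *: x + y) z = a * ip x z + ip y z;
  ip_conj : forall x y : H, ip y x = (ip x y)^*;
  ip_ge0 : forall x : H, 0 <= ip x x;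
  ip_eq0 : forall x : H, ip x x = 0 -> x = 0;
  ip_complete : forall u : nat -> H,
    (forall e : R, 0 < e -> exists N : nat, forall m k : nat, (N <= m)%N -> (N <= k)%N ->
        Num.sqrt (complex.Re (ip (u m - u k) (u m - u k))) < e) ->
    exists l : H, forall e : R, 0 < e -> exists N : nat, forall m : nat, (N <= m)%N ->
        Num.sqrt (complex.Re (ip (u m - l) (u m - l))) < e
}.

Definition hnorm (R : realType) (H : lmodType R[i]) (hs : hilbert H) (x : H) : R :=
  Num.sqrt (complex.Re (ip hs x x)).

Definition bounded_linear (R : realType) (H : lmodType R[i]) (hs : hilbert H)
  (T : H -> H) : Prop :=
  (forall (a : R[i]) (x y : H), T (a *: x + y) = a *: T x + T y) /\
  (exists M : R, forall x : H, hnorm hs (T x) <= M * hnorm hs x).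

(* A *-representation sigma of E_n on H, given by its generators
   S_i = sigma(s_i): bounded operators that are isometries (S_i^* S_i = 1)
   with pairwise orthogonal ranges (S_i^* S_j = 0 for i <> j).
   By the universal property of E_n these are exactly the (unital)
   *-representations of E_n. *)
Definition En_rep (R : realType) (n : nat) (H : lmodType R[i]) (hs : hilbert H)
  (S : 'I_n -> H -> H) : Prop :=
  (forall i, bounded_linear hs (S i)) /\
  (forall i x y, ip hs (S i x) (S i y) = ip hs x y) /\
  (forall i j x y, i != j -> ip hs (S i x) (S j y) = 0).

(* words of the free semigroup F_n^+ are sequences of letters in 'I_n;
   S_w = S_{i1} ... S_{ik} for w = i1 ... ik (the empty word gives the identity) *)
Definition Sword (R : realType) (n : nat) (H : lmodType R[i])
  (S : 'I_n -> H -> H) (w : seq 'I_n) : H -> H :=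
  foldr (fun i T => S i \o T) id w.

Definition wandering (R : realType) (n : nat) (H : lmodType R[i]) (hs : hilbert H)
  (S : 'I_n -> H -> H) (eta : H) : Prop :=
  forall w w' : seq 'I_n,
    ip hs (Sword S w eta) (Sword S w' eta) = (w == w')%:R.

Definition l2 (R : realType) (n : nat) (f : seq 'I_n -> R[i]) : Prop :=
  (\esum_(w in [set: seq 'I_n]) (csq (f w))%:E < +oo)%E.

Definition l2norm (R : realType) (n : nat) (f : seq 'I_n -> R[i]) : R :=
  Num.sqrt (fine (\esum_(w in [set: seq 'I_n]) (csq (f w))%:E)).

(* left creation operator L_i xi_w = xi_{iw} *)
Definition Lcr (R : realType) (n : nat) (i : 'I_n) (f : seq 'I_n -> R[i])
  : seq 'I_n -> R[i] :=
  fun v => match v with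
           | [::] => 0
           | j :: w => if j == i then f w else 0
           end.

(* X in X(sigma): a bounded linear map l^2(F_n^+) -> H with S_i X = X L_i.
   X is given as a function on all of (seq 'I_n -> C); only its values on
   l^2 matter. *)
Definition in_Xsigma (R : realType) (n : nat) (H : lmodType R[i]) (hs : hilbert H)
  (S : 'I_n -> H -> H) (X : (seq 'I_n -> R[i]) -> H) : Prop :=
  (forall (a : R[i]) (f g : seq 'I_n -> R[i]), l2 f -> l2 g ->
      X (fun w => a * f w + g w) = a *: X f + X g) /\
  (exists M : R, forall f, l2 f -> hnorm hs (X f) <= M * l2norm f) /\
  (forall (i : 'I_n) f, l2 f -> S i (X f) = X (Lcr i f)).

Definition bounded_below (R : realType) (n : nat) (H : lmodType R[i]) (hs : hilbert H)
  (X : (seq 'I_n -> R[i]) -> H) : Prop :=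
  exists c : R, 0 < c /\ forall f, l2 f -> c * l2norm f <= hnorm hs (X f).

(* Main.v *)
Require Import Defs.
From mathcomp Require Import all_boot all_algebra.
From mathcomp Require Import all_classical all_reals all_analysis.
From mathcomp Require Import complex.
From mathcomp Require Import ring lra all_order.
Import Order.TTheory GRing.Theory Num.Theory.
Local Open Scope ring_scope.
Local Open Scope complex_scope.

Lemma natinv_lt (R : realType) (e : R) : 0 < e ->
  exists N, forall k, (N <= k)%N -> (k.+1%:R)^-1 < e.
Proof.
move=> e0; have e1 : 0 <= e^-1 by rewrite invr_ge0 ltW.
have := archi_boundP e1.
move: (Num.Def.archi_bound e^-1) => N hN; exists N => k hk.
rewrite -(invrK e) ltf_pV2 ?posrE ?invr_gt0 //.
apply: (lt_le_trans hN); rewrite ler_nat; exact: (leq_trans hk).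
Qed.

Lemma RCM (R : realType) (r s : R) : r%:C * s%:C = (r * s)%:C :> R[i].
Proof. by apply/eqP; rewrite eq_complex /= !mulr0 !mul0r subr0 addr0 !eqxx. Qed.


Lemma sq_bound (R : realType) (d e a A : R) : 0 < d -> 0 < e -> 0 <= a -> a <= 1 ->
  a * (4 * (2 * d + 1)) < e ^+ 2 -> 0 <= A -> A < d + a -> A ^+ 2 < d ^+ 2 + e ^+ 2 / 4.
Proof.
move=> d0 e0 a0 a1 ha A0 hA.
have h1 : A ^+ 2 < (d + a) ^+ 2.
  rewrite !expr2; apply: (le_lt_trans (y := A * (d + a))).
    by apply: ler_wpM2l => //; apply: ltW.
  have da : 0 < d + a by lra.
  by rewrite ltr_pM2r.
have h2 : (d + a) ^+ 2 <= d ^+ 2 + a * (2 * d + 1).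
  rewrite sqrrD; have : a ^+ 2 <= a by rewrite expr2 ler_piMr.
  lra.
have h3 : a * (2 * d + 1) < e ^+ 2 / 4.
  rewrite ltr_pdivlMr //; lra.
lra.
Qed.

Lemma final_bound (R : realType) (d e A B M Z : R) :
  0 < e -> 0 <= M -> d ^+ 2 <= Z ^+ 2 ->
  A ^+ 2 < d ^+ 2 + e ^+ 2 / 4 -> B ^+ 2 < d ^+ 2 + e ^+ 2 / 4 ->
  2 ^+ 2 * Z ^+ 2 + M ^+ 2 = 2 * A ^+ 2 + 2 * B ^+ 2 -> M < e.
Proof.
move=> e0 M0 hZ hA hB hp.
have : M ^+ 2 < e ^+ 2 by lra.
by rewrite ltr_pXn2r // ?nnegrE // ltW.
Qed.

Section L2.
Variables (R : realType) (n : nat).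
Local Notation W := (seq 'I_n).
Implicit Types (f g : W -> R[i]).

Lemma csq_ge0 (z : R[i]) : 0 <= csq z.
Proof. by rewrite /csq addr_ge0 // sqr_ge0. Qed.

Lemma esum_fin_le (h : W -> R) s : (forall w, 0 <= h w) -> uniq s ->
  ((\sum_(w <- s) h w)%:E <= \esum_(w in [set: W]) (h w)%:E)%E.
Proof.
move=> h0 us; apply: esum_ge; exists [set` s]%classic.
  by split; [exact: finite_seq | by []].
by rewrite -fsbig_seq // sumEFin.
Qed.

Lemma esum_le_of_bound (h : W -> R) B : (forall w, 0 <= h w) ->
  (forall s, uniq s -> \sum_(w <- s) h w <= B) ->
  (\esum_(w in [set: W]) (h w)%:E <= B%:E)%E.
Proof.
move=> h0 hB; rewrite /esum; apply: ge_ereal_sup => _ [F [finF _] <-].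
rewrite fsbig_finite // sumEFin lee_fin; apply: hB; exact: finmap.fset_uniq.
Qed.

Lemma esum_approx (h : W -> R) e : (forall w, 0 <= h w) -> 0 < e ->
  (\esum_(w in [set: W]) (h w)%:E < +oo)%E ->
  exists s, uniq s /\ fine (\esum_(w in [set: W]) (h w)%:E) - e < \sum_(w <- s) h w.
Proof.
move=> h0 e0 fin.
have fn : \esum_(w in [set: W]) (h w)%:E \is a fin_num.
  by rewrite ge0_fin_numE // esum_ge0 // => w _; rewrite lee_fin.
have [x [F [finF _] <-] hx] := ub_ereal_sup_adherent e0 fn.
exists (finmap.enum_fset (fset_set F)); split; first exact: finmap.fset_uniq.
move: hx; rewrite fsbig_finite // sumEFin => hx.
by rewrite -lte_fin EFinB fineK.
Qed.

Definition sq f s := \sum_(w <- s) csq (f w).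

Lemma sq_ge0 f s : 0 <= sq f s.
Proof. by apply: sumr_ge0 => w _; exact: csq_ge0. Qed.

Lemma l2P f : l2 f <-> exists B, forall s, uniq s -> sq f s <= B.
Proof.
split.
  move=> hf; have fn : \esum_(w in [set: W]) (csq (f w))%:E \is a fin_num.
    by rewrite ge0_fin_numE // esum_ge0 // => w _; rewrite lee_fin csq_ge0.
  exists (fine (\esum_(w in [set: W]) (csq (f w))%:E)) => s us.
  by rewrite -lee_fin fineK //; apply: esum_fin_le => // w; exact: csq_ge0.
move=> [B hB]; rewrite /l2.
apply: (le_lt_trans (esum_le_of_bound (fun w => csq (f w)) B _ hB)).
- by move=> w; exact: csq_ge0.
- by rewrite ltry.
Qed.

Lemma l2norm_sq f : l2norm f ^+ 2 = fine (\esum_(w in [set: W]) (csq (f w))%:E).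
Proof.
rewrite /l2norm sqr_sqrtr // fine_ge0 // esum_ge0 // => w _.
by rewrite lee_fin csq_ge0.
Qed.

Lemma l2norm_ge0 f : 0 <= l2norm f.
Proof. exact: sqrtr_ge0. Qed.

Lemma l2_le f s : l2 f -> uniq s -> sq f s <= l2norm f ^+ 2.
Proof.
move=> hf us; have fn : \esum_(w in [set: W]) (csq (f w))%:E \is a fin_num.
  by rewrite ge0_fin_numE // esum_ge0 // => w _; rewrite lee_fin csq_ge0.
by rewrite l2norm_sq -lee_fin fineK //; apply: esum_fin_le => // w; exact: csq_ge0.
Qed.

Lemma l2_approx f e : l2 f -> 0 < e -> exists s, uniq s /\ l2norm f ^+ 2 - e < sq f s.
Proof.
move=> hf e0; rewrite l2norm_sq; apply: esum_approx => //.
by move=> w; exact: csq_ge0.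
Qed.

Lemma csqM (a b : R[i]) : csq (a * b) = csq a * csq b.
Proof. case: a => a1 a2; case: b => b1 b2; rewrite /csq /=. ring. Qed.

Lemma csqD_le (a b : R[i]) : csq (a + b) <= 2 * csq a + 2 * csq b.
Proof.
case: a => a1 a2; case: b => b1 b2; rewrite /csq /=.
have := sqr_ge0 (a1 - b1); have := sqr_ge0 (a2 - b2); nra.
Qed.

Lemma l2_lin a f g : l2 f -> l2 g -> l2 (fun w => a * f w + g w).
Proof.
move=> /l2P [B1 h1] /l2P [B2 h2]; apply/l2P.
exists (2 * csq a * B1 + 2 * B2) => s us.
apply: (le_trans (y := \sum_(w <- s) (2 * csq a * csq (f w) + 2 * csq (g w)))).
  apply: ler_sum => w _; rewrite -mulrA -csqM; exact: csqD_le.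
rewrite big_split /= -!mulr_sumr.
apply: lerD; last by rewrite ler_pM2l // h2.
apply: ler_wpM2l; first by rewrite mulr_ge0 // csq_ge0.
exact: h1.
Qed.

Lemma csq0 : csq (0 : R[i]) = 0.
Proof. by rewrite /csq /= expr0n /= addr0. Qed.

Lemma l2_Lcr i f : l2 f -> l2 (Lcr i f).
Proof.
move=> /l2P [B h]; apply/l2P; exists B => s us.
pose P := fun v : W => if v is j :: _ then j == i else false.
have -> : sq (Lcr i f) s = sq f [seq behead v | v <- s & P v].
  rewrite /sq big_map big_filter [RHS]big_mkcond /=.
  apply: eq_bigr => -[|j w] _ /=; first by rewrite csq0.
  by rewrite /P; case: (j == i) => //; rewrite csq0.
apply: h; rewrite map_inj_in_uniq ?filter_uniq //.
move=> [|j w] [|k v]; rewrite !mem_filter /P //= => /andP[/eqP -> _] /andP[/eqP -> _] ->.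
by [].
Qed.

Definition delta : W -> R[i] := fun w => (w == [::])%:R.

Lemma l2_delta : l2 delta.
Proof.
apply/l2P; exists 1 => s us.
have e : forall w, csq (delta w) = (w == [::])%:R.
  by move=> w; rewrite /delta /csq; case: (w == [::]); rewrite /= ?expr0n /= ?expr1n ?addr0.
rewrite /sq; under eq_bigr do rewrite e.
case: (boolP ([::] \in s)) => hin.
  by rewrite (bigD1_seq [::]) //= ?eqxx big1 ?addr0 // => w /negbTE ->.
rewrite big1_seq ?ler01 // => w /= hw; case: eqP hw hin => // -> ->; done.
Qed.

Lemma l2norm_ge1 f : l2 f -> csq (f [::]) = 1 -> 1 <= l2norm f.
Proof.
move=> hf h1; have := @l2_le f [:: [::]] hf isT.
rewrite /sq big_seq1 h1 => h.
have := l2norm_ge0 f; move: h; move: (l2norm f) => z; nra.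
Qed.

End L2.
Arguments csq_ge0 {R}.
Arguments csqM {R}.
Arguments csqD_le {R}.
Arguments csq0 {R}.
Arguments esum_fin_le {R n}.
Arguments esum_le_of_bound {R n}.
Arguments esum_approx {R n}.
Arguments sq {R n}.
Arguments sq_ge0 {R n}.
Arguments l2P {R n}.
Arguments l2norm_sq {R n}.
Arguments l2norm_ge0 {R n}.
Arguments l2_le {R n}.
Arguments l2_approx {R n}.
Arguments l2_lin {R n}.
Arguments l2_Lcr {R n}.
Arguments delta {R n}.
Arguments l2_delta {R n}.
Arguments l2norm_ge1 {R n}.

Section Hil.
Variables (R : realType) (H : lmodType R[i]) (hs : hilbert H).
Local Notation ip := (ip hs).
Local Notation hn := (hnorm hs).
Implicit Types (x y z : H) (a b : R[i]) (r s t : R).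

Lemma ipDl x y z : ip (x + y) z = ip x z + ip y z.
Proof. by have := ip_linl hs 1 x y z; rewrite scale1r mul1r. Qed.

Lemma ip0l z : ip 0 z = 0.
Proof.
have := ip_linl hs (-1) z z z.
by rewrite scaleN1r addNr mulN1r addNr.
Qed.

Lemma ipZl a x z : ip (a *: x) z = a * ip x z.
Proof. by have := ip_linl hs a x 0 z; rewrite addr0 ip0l addr0. Qed.

Lemma ipDr x y z : ip z (x + y) = ip z x + ip z y.
Proof. by rewrite [ip z x]ip_conj [ip z y]ip_conj (ip_conj hs (x + y)) ipDl rmorphD. Qed.

Lemma ipZr a x z : ip z (a *: x) = a^*%R * ip z x.
Proof. by rewrite [ip z x]ip_conj (ip_conj hs (a *: x)) ipZl rmorphM. Qed.

Lemma ip0r z : ip z 0 = 0.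
Proof. by rewrite (ip_conj hs 0) ip0l rmorph0. Qed.

Lemma ipNl x z : ip (- x) z = - ip x z.
Proof. by rewrite -scaleN1r ipZl mulN1r. Qed.

Lemma ipNr x z : ip z (- x) = - ip z x.
Proof. by rewrite [ip z x]ip_conj (ip_conj hs (- x)) ipNl rmorphN. Qed.

Lemma ipBl x y z : ip (x - y) z = ip x z - ip y z.
Proof. by rewrite ipDl ipNl. Qed.

Lemma ipBr x y z : ip z (x - y) = ip z x - ip z y.
Proof. by rewrite ipDr ipNr. Qed.

Definition q x := complex.Re (ip x x).
Definition rip x y := complex.Re (ip x y).

Lemma ge0_real (c : R[i]) : 0 <= c -> c = (complex.Re c)%:C.
Proof. case: c => a b. rewrite lecE /=. by move=> /andP[/eqP /= -> _]. Qed.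

Lemma ipxx x : ip x x = (q x)%:C.
Proof. exact: ge0_real (ip_ge0 hs x). Qed.

Lemma q_ge0 x : 0 <= q x.
Proof. have := ip_ge0 hs x; rewrite lecE => /andP[_]; done. Qed.

Lemma q_eq0 x : q x = 0 -> x = 0.
Proof. move=> h; apply: (ip_eq0 (h:=hs)). by rewrite ipxx h. Qed.

Lemma ReC (c : R[i]) : complex.Re (c^*%R) = complex.Re c.
Proof. by case: c. Qed.

Lemma ReD (c d : R[i]) : complex.Re (c + d) = complex.Re c + complex.Re d.
Proof. by case: c; case: d. Qed.

Lemma ReN (c : R[i]) : complex.Re (- c) = - complex.Re c.
Proof. by case: c. Qed.

Lemma ReRM r (c : R[i]) : complex.Re (r%:C * c) = r * complex.Re c.
Proof. by case: c => a b /=; rewrite mul0r subr0. Qed.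

Lemma conjR r : (r%:C)^*%R = r%:C :> R[i].
Proof. by apply/eqP; rewrite eq_complex /= eqxx oppr0 eqxx. Qed.

Lemma rip_sym x y : rip x y = rip y x.
Proof. by rewrite /rip (ip_conj hs x) ReC. Qed.

Lemma qD x y : q (x + y) = q x + q y + 2 * rip x y.
Proof.
rewrite /q /rip ipDl !ipDr !ReD -/(rip y x) rip_sym /rip; lra.
Qed.

Lemma ripZr r x y : rip x (r%:C *: y) = r * rip x y.
Proof. by rewrite /rip ipZr conjR ReRM. Qed.

Lemma ripZl r x y : rip (r%:C *: x) y = r * rip x y.
Proof. by rewrite /rip ipZl ReRM. Qed.

Lemma qZ r x : q (r%:C *: x) = r ^+ 2 * q x.
Proof. by rewrite /q ipZl ipZr conjR !ReRM mulrA -expr2. Qed.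

Lemma qN x : q (- x) = q x.
Proof. by rewrite /q ipNl ipNr opprK. Qed.

Lemma q_sxy r x y : q (x + r%:C *: y) = q x + 2 * r * rip x y + r ^+ 2 * q y.
Proof. rewrite qD qZ ripZr; lra. Qed.

Lemma CS x y : rip x y ^+ 2 <= q x * q y.
Proof.
have [qy0|qy0] := eqVneq (q y) 0.
  by rewrite qy0 mulr0 (@q_eq0 y qy0) /rip ip0r expr0n.
have qyp : 0 < q y by rewrite lt0r qy0 q_ge0.
have := q_ge0 (x + (- (rip x y / q y))%:C *: y).
rewrite q_sxy => h.
have e : rip x y / q y * q y = rip x y by rewrite mulfVK.
have qx := q_ge0 x.
nra.
Qed.

Lemma hn_sq x : hn x ^+ 2 = q x.
Proof. by rewrite /hnorm sqr_sqrtr // q_ge0. Qed.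

Lemma hn_ge0 x : 0 <= hn x.
Proof. exact: sqrtr_ge0. Qed.

Lemma rip_le x y : rip x y <= hn x * hn y.
Proof.
have := CS x y; rewrite -!hn_sq -exprMn => h.
have := mulr_ge0 (hn_ge0 x) (hn_ge0 y).
move: h; move: (hn x * hn y) => Z; move: (rip x y) => a; nra.
Qed.

Lemma hnN x : hn (- x) = hn x.
Proof. by rewrite /hnorm -/(q (-x)) qN. Qed.

Lemma rip_abs x y : `|rip x y| <= hn x * hn y.
Proof.
rewrite ler_norml rip_le andbT.
have := rip_le (- x) y. rewrite hnN /rip ipNl ReN. lra.
Qed.

Lemma hn_triangle x y : hn (x + y) <= hn x + hn y.
Proof.
have h1 := hn_ge0 x; have h2 := hn_ge0 y; have h3 := hn_ge0 (x + y).
have := rip_le x y.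
have : hn (x + y) ^+ 2 = hn x ^+ 2 + hn y ^+ 2 + 2 * rip x y by rewrite !hn_sq qD.
nra.
Qed.

Lemma hn_eq0 x : hn x = 0 -> x = 0.
Proof. by move=> h; apply: q_eq0; rewrite -hn_sq h expr0n. Qed.

Lemma hnZ r x : hn (r%:C *: x) = `|r| * hn x.
Proof. by rewrite /hnorm -/(q _) qZ sqrtrM ?sqrtr_sqr // sqr_ge0. Qed.


Definition conv (u : nat -> H) l :=
  forall e, 0 < e -> exists N, forall m, (N <= m)%N -> hn (u m - l) < e.
Definition cauchy (u : nat -> H) :=
  forall e, 0 < e -> exists N, forall m k, (N <= m)%N -> (N <= k)%N -> hn (u m - u k) < e.

Lemma complete u : cauchy u -> exists l, conv u l.
Proof. exact: ip_complete. Qed.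

Lemma hn_sub_sym x y : hn (x - y) = hn (y - x).
Proof. by rewrite -hnN opprB. Qed.

Lemma small0 r : 0 <= r -> (forall e, 0 < e -> r < e) -> r = 0.
Proof.
move=> r0 h; apply/eqP; rewrite eq_le r0 andbT; apply/negP => /negP.
rewrite -ltNge => rp; have := h r rp; by rewrite ltxx.
Qed.

Lemma conv_uniq u l1 l2 : conv u l1 -> conv u l2 -> l1 = l2.
Proof.
move=> c1 c2; apply/eqP; rewrite -subr_eq0; apply/eqP; apply: hn_eq0.
apply: small0; first exact: hn_ge0.
move=> e e0; have e2 : 0 < e / 2 by rewrite divr_gt0.
have [N1 h1] := c1 _ e2; have [N2 h2] := c2 _ e2.
have := h1 (maxn N1 N2) (leq_maxl _ _); have := h2 (maxn N1 N2) (leq_maxr _ _).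
have := hn_triangle (l1 - u (maxn N1 N2)) (u (maxn N1 N2) - l2).
rewrite [hn (l1 - _)]hn_sub_sym addrA subrK. lra.
Qed.

Lemma conv_add u v l l' : conv u l -> conv v l' -> conv (fun k => u k + v k) (l + l').
Proof.
move=> c1 c2 e e0; have e2 : 0 < e / 2 by rewrite divr_gt0.
have [N1 h1] := c1 _ e2; have [N2 h2] := c2 _ e2.
exists (maxn N1 N2) => m hm.
have := h1 m (leq_trans (leq_maxl _ _) hm); have := h2 m (leq_trans (leq_maxr _ _) hm).
have := hn_triangle (u m - l) (v m - l').
have -> : u m - l + (v m - l') = u m + v m - (l + l') by rewrite opprD addrACA.
lra.
Qed.

Lemma conv_map (T : H -> H) M u l :
  (forall x y, T (x - y) = T x - T y) -> (forall x, hn (T x) <= M * hn x) ->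
  conv u l -> conv (fun k => T (u k)) (T l).
Proof.
move=> Tad TM c e e0.
have M1 : 0 < `|M| + 1 by rewrite ltr_wpDl.
have [N h] := c (e / (`|M| + 1)) (divr_gt0 e0 M1).
exists N => m hm; rewrite -Tad.
apply: (le_lt_trans (TM _)).
have := h m hm; have := hn_ge0 (u m - l); move: (hn (u m - l)) => z z0 hz.
have : z * (`|M| + 1) < e by rewrite -ltr_pdivlMr.
have := ler_norm M; nra.
Qed.

Lemma ripDr x y z : rip z (x + y) = rip z x + rip z y.
Proof. by rewrite /rip ipDr ReD. Qed.

Lemma ripNr x z : rip z (- x) = - rip z x.
Proof. by rewrite /rip ipNr ReN. Qed.

Lemma conv_rip0 x u l : conv u l -> (forall k, rip x (u k) = 0) -> rip x l = 0.
Proof.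
move=> c h; apply/normr0_eq0; apply: small0 => // e e0.
have hx : 0 < hn x + 1 by rewrite ltr_wpDl ?hn_ge0.
have [N hN] := c (e / (hn x + 1)) (divr_gt0 e0 hx).
have e1 : rip x l = - rip x (u N - l) by rewrite ripDr ripNr h sub0r opprK.
rewrite e1 normrN; apply: (le_lt_trans (rip_abs _ _)).
have := hN N (leqnn N); rewrite ltr_pdivlMr // => hz.
have := hn_ge0 (u N - l); have := hn_ge0 x.
move: hz; move: (hn (u N - l)) (hn x) => z w hz z0 w0.
nra.
Qed.

Lemma rip_i x y : rip x ('i *: y) = complex.Im (ip x y).
Proof.
rewrite /rip ipZr; case: (ip x y) => a b /=.
rewrite /conjc /=. lra.
Qed.

Lemma ip_eq0_of_rip x y : rip x y = 0 -> rip x ('i *: y) = 0 -> ip x y = 0.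
Proof.
rewrite rip_i /rip; case: (ip x y) => a b /= -> -> //.
Qed.


Lemma conv_const_sub z u l : conv u l -> conv (fun k => z - u k) (z - l).
Proof.
move=> c e e0; have [N h] := c e e0; exists N => m hm.
suff -> : z - u m - (z - l) = l - u m by rewrite hn_sub_sym; exact: h.
by rewrite opprB addrC addrA subrK.
Qed.

Lemma hn_lim_ge u l r : conv u l -> (forall k, r <= hn (u k)) -> r <= hn l.
Proof.
move=> c h; apply/ler_addgt0Pr => e e0.
have [N hN] := c e e0; have := hN N (leqnn N); have := h N.
have := hn_triangle (u N - l) l; rewrite subrK.
lra.
Qed.

Lemma hn_lim_le u l r : conv u l ->
  (forall e, 0 < e -> exists N, forall k, (N <= k)%N -> hn (u k) <= r + e) -> hn l <= r.
Proof.
move=> c h; apply/ler_addgt0Pr => e e0.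
have e2 : 0 < e / 2 by rewrite divr_gt0.
have [N1 h1] := c _ e2; have [N2 h2] := h _ e2.
have := h1 (maxn N1 N2) (leq_maxl _ _); have := h2 (maxn N1 N2) (leq_maxr _ _).
have := hn_triangle (l - u (maxn N1 N2)) (u (maxn N1 N2)); rewrite subrK.
rewrite hn_sub_sym. lra.
Qed.

Lemma iconj : 'i * ('i)^*%R = 1 :> R[i].
Proof. by apply/eqP; rewrite eq_complex /= !(mul0r, mulr0, mul1r, mulr1, subr0, add0r, addr0, opprK, oppr0) !eqxx. Qed.

Lemma hn_i x : hn ('i *: x) = hn x.
Proof. by rewrite /hnorm ipZl ipZr mulrA iconj mul1r. Qed.

Section Rep.
Variables (n : nat) (S : 'I_n -> H -> H).
Hypothesis hS : En_rep hs S.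

Lemma S_lin i a x y : S i (a *: x + y) = a *: S i x + S i y.
Proof. by case: hS => h _; case: (h i) => l _; exact: l. Qed.

Lemma S_ip i x y : ip (S i x) (S i y) = ip x y.
Proof. by case: hS => _ [h _]; exact: h. Qed.

Lemma S_orth i j x y : i != j -> ip (S i x) (S j y) = 0.
Proof. by case: hS => _ [_ h]; exact: h. Qed.

Lemma Sword_lin w a x y : Sword S w (a *: x + y) = a *: Sword S w x + Sword S w y.
Proof. by elim: w => [|i w IH] //=; rewrite IH S_lin. Qed.

Lemma Sword_sub w x y : Sword S w (x - y) = Sword S w x - Sword S w y.
Proof.
have := Sword_lin w (-1) y x; rewrite !scaleN1r => h.
by rewrite addrC h addrC.
Qed.

Lemma Sword_scale w a x : Sword S w (a *: x) = a *: Sword S w x.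
Proof.
have := Sword_lin w a x 0; rewrite addr0 => ->.
have := Sword_sub w 0 0; rewrite subrr => h.
by rewrite h subrr addr0.
Qed.

Lemma Sword_ip w x y : ip (Sword S w x) (Sword S w y) = ip x y.
Proof. by elim: w => [|i w IH] //=; rewrite S_ip IH. Qed.

Lemma Sword_hn w x : hn (Sword S w x) = hn x.
Proof. by rewrite /hnorm Sword_ip. Qed.

Lemma wander_of e : ip e e = 1 ->
  (forall u, u != [::] -> ip e (Sword S u e) = 0) -> wandering hs S e.
Proof.
move=> h1 h0 w; elim: w => [|i w IH] [|j v] /=.
- by rewrite h1.
- by rewrite (h0 (j :: v)).
- by rewrite ip_conj (h0 (i :: w)) // rmorph0.
- case: (eqVneq i j) => [<-|ne].
    by rewrite S_ip IH eqseq_cons eqxx.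
  by rewrite S_orth // eqseq_cons (negbTE ne).
Qed.


Local Notation W := (seq 'I_n).
Implicit Types (f g : W -> R[i]).

Definition Lw (u : W) (f : W -> R[i]) := foldr (fun i g => Lcr i g) f u.

Lemma l2_Lw u f : l2 f -> l2 (Lw u f).
Proof. by move=> hf; elim: u => [|i u IH] //=; exact: l2_Lcr. Qed.

Lemma Lw_nil0 u f : u != [::] -> Lw u f [::] = 0.
Proof. by case: u. Qed.

Lemma l2_0 : l2 (fun _ : W => 0 : R[i]).
Proof. by apply/l2P; exists 0 => s _; rewrite /sq big1 // => w _; exact: csq0. Qed.

Definition V0 (f : W -> R[i]) := l2 f /\ f [::] = 0.

Section Back.
Variable X : (W -> R[i]) -> H.
Hypothesis hX : in_Xsigma hs S X.
Variable c : R.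
Hypothesis c0 : 0 < c.
Hypothesis hc : forall f, l2 f -> c * l2norm f <= hn (X f).

Lemma X_lin a f g : l2 f -> l2 g -> X (fun w => a * f w + g w) = a *: X f + X g.
Proof. by case: hX => h _; exact: h. Qed.

Lemma X_int i f : l2 f -> S i (X f) = X (Lcr i f).
Proof. by case: hX => _ [_ h]; exact: h. Qed.

Lemma X0 : X (fun _ => 0) = 0.
Proof.
have := X_lin 1 _ _ l2_0 l2_0.
have -> : (fun w : W => 1 * 0 + 0) = (fun _ => 0 : R[i]).
  by apply: funext => w; rewrite mul1r addr0.
rewrite scale1r => h; apply: (addrI (X (fun _ => 0))); by rewrite addr0 -h.
Qed.

Lemma X_add f g : l2 f -> l2 g -> X (fun w => f w + g w) = X f + X g.
Proof.
move=> hf hg; have := X_lin 1 _ _ hf hg; rewrite scale1r => <-.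
by congr X; apply: funext => w; rewrite mul1r.
Qed.

Lemma X_scale a f : l2 f -> X (fun w => a * f w) = a *: X f.
Proof.
move=> hf; have := X_lin a _ _ hf l2_0; rewrite X0 addr0 => <-.
by congr X; apply: funext => w; rewrite addr0.
Qed.

Lemma l2_add f g : l2 f -> l2 g -> l2 (fun w => f w + g w).
Proof.
move=> hf hg; have := l2_lin 1 _ _ hf hg.
by have -> : (fun w => 1 * f w + g w) = (fun w => f w + g w)
  by apply: funext => w; rewrite mul1r.
Qed.

Lemma l2_scale a f : l2 f -> l2 (fun w => a * f w).
Proof.
move=> hf; have := l2_lin a _ _ hf l2_0.
by have -> : (fun w => a * f w + 0) = (fun w => a * f w)
  by apply: funext => w; rewrite addr0.
Qed.

Lemma V0_add f g : V0 f -> V0 g -> V0 (fun w => f w + g w).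
Proof. by move=> [hf f0] [hg g0]; split; [exact: l2_add | rewrite f0 g0 addr0]. Qed.

Lemma V0_scale a f : V0 f -> V0 (fun w => a * f w).
Proof. by move=> [hf f0]; split; [exact: l2_scale | rewrite f0 mulr0]. Qed.

Lemma V0_0 : V0 (fun _ => 0).
Proof. by split; [exact: l2_0|]. Qed.

Lemma Sword_X u f : l2 f -> Sword S u (X f) = X (Lw u f).
Proof.
move=> hf; elim: u => [|i u IH] //=.
by rewrite IH X_int //; exact: l2_Lw.
Qed.

Lemma V0_Lw u f : u != [::] -> l2 f -> V0 (Lw u f).
Proof. by move=> hu hf; split; [exact: l2_Lw | exact: Lw_nil0]. Qed.

Definition y0 := X delta.

Lemma y_dist f : V0 f -> c <= hn (y0 - X f).
Proof.
move=> [hf f0].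
have hg := l2_lin (-1) _ _ hf l2_delta.
have e : (-1) *: X f + X delta = y0 - X f by rewrite scaleN1r addrC.
have := hc _ hg; rewrite (X_lin _ _ _ hf l2_delta) => h0.
have h : c * l2norm (fun w => -1 * f w + delta w) <= hn (y0 - X f).
  by rewrite -e; exact: h0.
apply: le_trans h; rewrite ler_pMr //.
apply: l2norm_ge1 => //.
rewrite f0 mulr0 add0r /delta eqxx /csq /=.
by rewrite expr0n /= addr0 expr1n.
Qed.

Definition D := [set r : R | exists f, V0 f /\ r = hn (y0 - X f)]%classic.
Definition d := inf D.

Lemma D_inf : has_inf D.
Proof.
split; first by exists (hn (y0 - X (fun _ => 0))), (fun _ => 0); split => //; exact: V0_0.
exists c => _ [f [hf ->]]; exact: y_dist.
Qed.

Lemma d_le f : V0 f -> d <= hn (y0 - X f).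
Proof. by move=> hf; apply: (ge_inf D_inf.2); exists f. Qed.

Lemma c_le_d : c <= d.
Proof.
apply: lb_le_inf; first exact: D_inf.1.
by move=> _ [f [hf ->]]; exact: y_dist.
Qed.

Lemma d_gt0 : 0 < d.
Proof. exact: lt_le_trans c0 c_le_d. Qed.

Lemma seq_ex k : exists f, V0 f /\ hn (y0 - X f) < d + (k.+1%:R)^-1.
Proof.
have ek : (0:R) < (k.+1%:R)^-1 by rewrite invr_gt0 ltr0Sn.
have [r [f [hf ->]] hr] := inf_adherent ek D_inf.
by exists f.
Qed.

Definition F := projT1 (choice seq_ex).
Lemma F_V0 k : V0 (F k).
Proof. exact: (projT2 (choice seq_ex) k).1. Qed.
Lemma F_lt k : hn (y0 - X (F k)) < d + (k.+1%:R)^-1.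
Proof. exact: (projT2 (choice seq_ex) k).2. Qed.

Definition m k := X (F k).

Lemma two_mid (z a b : H) :
  (2%:C) *: (z - ((2^-1)%:C *: a + (2^-1)%:C *: b)) = (z - a) + (z - b).
Proof.
rewrite scalerBr scalerDr !scalerA !RCM mulfV ?pnatr_eq0 // !scale1r.
have -> : (2%:C : R[i]) = 1 + 1 by apply/eqP; rewrite eq_complex /= addr0 !eqxx.
by rewrite scalerDl scale1r opprD addrACA.
Qed.

Lemma para (a b : H) : q (a + b) + q (a - b) = 2 * q a + 2 * q b.
Proof. rewrite !qD qN ripNr; lra. Qed.

Lemma m_cauchy : cauchy m.
Proof.
move=> e e0.
have dp := d_gt0.
have hd1 : 0 < 4 * (2 * d + 1) by rewrite mulr_gt0 // addr_gt0 // mulr_gt0.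
have t0 : 0 < e ^+ 2 / (4 * (2 * d + 1)) by rewrite divr_gt0 ?exprn_gt0.
have [N hN] := @natinv_lt _ _ t0.
have key : forall j, (N <= j)%N -> hn (y0 - m j) ^+ 2 < d ^+ 2 + e ^+ 2 / 4.
  move=> j hj; apply: (@sq_bound _ d e ((j.+1%:R)^-1)) => //.
  - by rewrite invf_le1 ?ltr0Sn // ler1n.
  - by rewrite -ltr_pdivlMr //; exact: hN.
  - exact: hn_ge0.
  - exact: F_lt.
exists N => j k hj hk.
pose mid := fun w => (2^-1)%:C * F j w + (2^-1)%:C * F k w.
have Vmid : V0 mid by apply: V0_add; apply: V0_scale; exact: F_V0.
have l2j : l2 (F j) by case: (F_V0 j).
have l2k : l2 (F k) by case: (F_V0 k).
have Xmid : X mid = (2^-1)%:C *: m j + (2^-1)%:C *: m k.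
  by rewrite /mid (X_add _ _ (l2_scale _ _ l2j) (l2_scale _ _ l2k)) (X_scale _ _ l2j) (X_scale _ _ l2k).
have hmid := d_le _ Vmid.
have e1 : (y0 - m j) + (y0 - m k) = 2%:C *: (y0 - X mid) by rewrite Xmid two_mid.
have e2 : (y0 - m j) - (y0 - m k) = - (m j - m k).
  by rewrite opprB addrC addrA subrK opprB.
have := para (y0 - m j) (y0 - m k); rewrite e1 e2 qN qZ -!hn_sq => hp.
apply: (@final_bound _ d e (hn (y0 - m j)) (hn (y0 - m k)) _ (hn (y0 - X mid)) e0 (hn_ge0 _) _ (key j hj) (key k hk) hp).
by rewrite ler_pXn2r ?nnegrE ?hn_ge0 // ltW.
Qed.

Definition p := projT1 (cid (complete _ m_cauchy)).
Lemma m_conv : conv m p.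
Proof. exact: (projT2 (cid (complete _ m_cauchy))). Qed.

Definition eta' := y0 - p.

Lemma eta'_conv : conv (fun k => y0 - m k) eta'.
Proof. exact: (conv_const_sub _ _ _ m_conv). Qed.

Lemma hn_eta'_ge : d <= hn eta'.
Proof. apply: (hn_lim_ge _ _ _ eta'_conv) => k; exact: d_le _ (F_V0 k). Qed.

Lemma hn_eta'_le : hn eta' <= d.
Proof.
apply: (hn_lim_le _ _ _ eta'_conv) => e e0.
have [N hN] := @natinv_lt _ _ e0.
exists N => k hk; apply: ltW; apply: (lt_le_trans (F_lt k)).
by rewrite lerD2l; apply: ltW; exact: hN.
Qed.

Lemma hn_eta' : hn eta' = d.
Proof. by apply/eqP; rewrite eq_le hn_eta'_le hn_eta'_ge. Qed.

Lemma A1 g r : V0 g -> d <= hn (eta' - r%:C *: X g).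
Proof.
move=> hg.
have c1 := conv_const_sub (y0 - r%:C *: X g) _ _ m_conv.
have -> : eta' - r%:C *: X g = y0 - r%:C *: X g - p.
  by rewrite /eta' addrAC.
apply: (hn_lim_ge _ _ _ c1) => k.
have hl : l2 (fun w => F k w + r%:C * g w).
  by apply: l2_add; [case: (F_V0 k) | apply: l2_scale; case: hg].
have V : V0 (fun w => F k w + r%:C * g w) by apply: V0_add; [exact: F_V0 | exact: V0_scale].
have := d_le _ V.
rewrite X_add; first last.
- by apply: l2_scale; case: hg.
- by case: (F_V0 k).
rewrite X_scale; last by case: hg.
by rewrite /m opprD addrA addrAC.
Qed.

Lemma A4 g : V0 g -> rip eta' (X g) = 0.
Proof.
move=> hg.
have h : forall r : R, 0 <= 2 * r * rip eta' (X g) + r ^+ 2 * q (X g).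
  move=> r; have := A1 _ (- r) hg.
  rewrite rmorphN scaleNr opprK -hn_eta' => h.
  have : hn eta' ^+ 2 <= hn (eta' + r%:C *: X g) ^+ 2.
    by rewrite ler_pXn2r ?nnegrE ?hn_ge0.
  rewrite !hn_sq q_sxy; lra.
have Q0 := q_ge0 (X g).
move: (rip eta' (X g)) (q (X g)) h Q0 => rho Q h Q0.
have t1 : 0 < Q + 1 by lra.
have := h (- rho / (Q + 1)).
have e : (- rho / (Q + 1)) * (Q + 1) = - rho by rewrite mulfVK // gt_eqF.
move: e; move: (- rho / (Q + 1)) => t e ht.
have : t ^+ 2 * (Q + 2) <= 0 by nra.
move=> h2; have : t = 0.
  apply/eqP; rewrite -sqrf_eq0; apply/eqP.
  apply/le_anti; rewrite sqr_ge0 andbT.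
  have : 0 < Q + 2 by lra.
  move=> q2; move: h2; rewrite mulrC => h3; nra.
move=> t0; move: e; rewrite t0 mul0r; lra.
Qed.

Lemma A5 g : V0 g -> ip eta' (X g) = 0.
Proof.
move=> hg; apply: ip_eq0_of_rip; first exact: A4.
rewrite -X_scale; last by case: hg.
by apply: A4; exact: V0_scale.
Qed.

Lemma A6 u : u != [::] -> ip eta' (Sword S u eta') = 0.
Proof.
move=> hu.
rewrite /eta' Sword_sub ipBr -/eta'.
rewrite /y0 Sword_X; last exact: l2_delta.
rewrite A5; last by apply: V0_Lw => //; exact: l2_delta.
rewrite sub0r; apply/eqP; rewrite oppr_eq0; apply/eqP.
have cS : conv (fun k => Sword S u (m k)) (Sword S u p).
  apply: (conv_map _ 1 _ _ _ _ m_conv).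
  - by move=> x z; exact: Sword_sub.
  - by move=> x; rewrite Sword_hn mul1r.
have hk : forall k, ip eta' (Sword S u (m k)) = 0.
  move=> k; rewrite /m Sword_X; last by case: (F_V0 k).
  by apply: A5; apply: V0_Lw => //; case: (F_V0 k).
apply: ip_eq0_of_rip.
  by apply: (conv_rip0 _ _ _ cS) => k; rewrite /rip hk.
have ci : conv (fun k => 'i *: Sword S u (m k)) ('i *: Sword S u p).
  apply: (conv_map (fun x => 'i *: x) 1 _ _ _ _ cS).
  - by move=> x z; rewrite scalerBr.
  - by move=> x; rewrite hn_i mul1r.
by apply: (conv_rip0 _ _ _ ci) => k; rewrite rip_i hk.
Qed.

Lemma back_wander : exists eta, wandering hs S eta.
Proof.
have dp := d_gt0.
exists ((d^-1)%:C *: eta'); apply: wander_of.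
  rewrite ipZl ipZr conjR ipxx -hn_sq hn_eta' !RCM.
  by rewrite mulrA -expr2 -exprMn mulVf ?gt_eqF // expr1n.
move=> u hu; rewrite Sword_scale ipZl ipZr A6 //.
by rewrite !mulr0.
Qed.

End Back.

Lemma qZc a x : q (a *: x) = csq a * q x.
Proof.
rewrite /q ipZl ipZr ipxx; case: a => a1 a2; rewrite /csq /=.
move: (q x) => t. rewrite /conjc /=. ring.
Qed.

Lemma hnZc a x : hn (a *: x) = Num.sqrt (csq a) * hn x.
Proof. by rewrite /hnorm -/(q _) qZc sqrtrM // csq_ge0. Qed.

Lemma conv_scale a u l : conv u l -> conv (fun k => a *: u k) (a *: l).
Proof.
move=> c; apply: (conv_map (fun x => a *: x) (Num.sqrt (csq a)) _ _ _ _ c).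
- by move=> x z; rewrite scalerBr.
- by move=> x; rewrite hnZc.
Qed.

Lemma conv_unshift u l : conv (fun k => u k.+1) l -> conv u l.
Proof.
move=> c e e0; have [N h] := c e e0; exists N.+1 => m hm.
by case: m hm => // m hm; apply: h.
Qed.

Lemma hn_lim_ge2 u l r K : conv u l -> (forall k, (K <= k)%N -> r <= hn (u k)) -> r <= hn l.
Proof.
move=> c h; apply/ler_addgt0Pr => e e0.
have [N hN] := c e e0; have := hN (maxn N K) (leq_maxl _ _); have := h (maxn N K) (leq_maxr _ _).
have := hn_triangle (u (maxn N K) - l) l; rewrite subrK.
lra.
Qed.

Lemma S_add i x z : S i (x + z) = S i x + S i z.
Proof. by have := S_lin i 1 x z; rewrite !scale1r. Qed.

Lemma S_sub i x z : S i (x - z) = S i x - S i z.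
Proof.
have := S_lin i (-1) z x; rewrite !scaleN1r => h.
by rewrite addrC h addrC.
Qed.

Lemma S0 i : S i 0 = 0.
Proof. by have := S_sub i 0 0; rewrite !subrr. Qed.

Lemma S_scale i a x : S i (a *: x) = a *: S i x.
Proof. by have := S_lin i a x 0; rewrite !addr0 S0 addr0. Qed.

Lemma S_hn i x : hn (S i x) = hn x.
Proof. by rewrite /hnorm S_ip. Qed.

Lemma S_sum i (s : seq W) (F : W -> H) : S i (\sum_(w <- s) F w) = \sum_(w <- s) S i (F w).
Proof.
elim: s => [|w s IH]; first by rewrite !big_nil S0.
by rewrite !big_cons S_add IH.
Qed.

Lemma ip_suml (s : seq W) (F : W -> H) z : ip (\sum_(w <- s) F w) z = \sum_(w <- s) ip (F w) z.
Proof.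
elim: s => [|w s IH]; first by rewrite !big_nil ip0l.
by rewrite !big_cons ipDl IH.
Qed.

Lemma ip_sumr (s : seq W) (F : W -> H) z : ip z (\sum_(w <- s) F w) = \sum_(w <- s) ip z (F w).
Proof.
elim: s => [|w s IH]; first by rewrite !big_nil ip0r.
by rewrite !big_cons ipDr IH.
Qed.

Lemma ReSum (s : seq W) (F : W -> R[i]) :
  complex.Re (\sum_(w <- s) F w) = \sum_(w <- s) complex.Re (F w).
Proof.
elim: s => [|w s IH]; first by rewrite !big_nil.
by rewrite !big_cons ReD IH.
Qed.

Lemma Re_mulJ (a : R[i]) : complex.Re (a * a^*%R) = csq a.
Proof. case: a => a1 a2; rewrite /csq /= /conjc /=. ring. Qed.

Fixpoint words k : seq W :=
  if k is k'.+1 then [::] :: [seq i :: w | i <- enum 'I_n, w <- words k'] else [:: [::]].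

Lemma mem_words k w : (w \in words k) = (size w <= k)%N.
Proof.
elim: k w => [|k IH] [|i w] //=.
rewrite in_cons /= ltnS -IH.
apply/allpairsP/idP => [[[j v] [_ hv /= [_ ->]]] // | hw].
by exists (i, w); split => //; rewrite mem_enum.
Qed.

Lemma uniq_words k : uniq (words k).
Proof.
elim: k => [|k IH] //=; apply/andP; split.
  by apply/negP => /allpairsP [[j v] [_ _]].
apply: allpairs_uniq => //; first exact: enum_uniq.
by move=> [j v] [j' v'] _ _ /= [-> ->].
Qed.

Lemma perm_words k m : (k <= m)%N ->
  perm_eq [seq w <- words m | (size w <= k)%N] (words k).
Proof.
move=> hkm; apply: uniq_perm; [exact: filter_uniq (uniq_words m) | exact: uniq_words |].
move=> w; rewrite mem_filter !mem_words; apply/andP/idP => [[]//|h]; split => //.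
exact: leq_trans hkm.
Qed.

Lemma split_words (V : zmodType) (F : W -> V) k m : (k <= m)%N ->
  \sum_(w <- words m) F w =
  \sum_(w <- words k) F w + \sum_(w <- [seq w <- words m | ~~ (size w <= k)%N]) F w.
Proof.
move=> hkm; rewrite (bigID (fun w => (size w <= k)%N)) /=; congr (_ + _).
  by rewrite -big_filter; apply: perm_big; exact: perm_words.
by rewrite big_filter.
Qed.

Section Fwd.
Variable eta : H.
Hypothesis heta : wandering hs S eta.

Definition ee (w : W) := Sword S w eta.

Lemma ip_e w v : ip (ee w) (ee v) = (w == v)%:R.
Proof. exact: heta. Qed.

Lemma ortho (s : seq W) (a : W -> R[i]) : uniq s ->
  q (\sum_(w <- s) a w *: ee w) = \sum_(w <- s) csq (a w).
Proof.
move=> us; rewrite /q ip_suml ReSum; apply: eq_big_seq => w hw.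
rewrite ipZl ip_sumr (bigD1_seq w hw us) /= ipZr ip_e eqxx mulr1 big1 ?addr0.
  exact: Re_mulJ.
move=> v hv; rewrite ipZr ip_e.
have -> : (w == v) = false by apply/negbTE; rewrite eq_sym.
by rewrite mulr0.
Qed.

Definition P k f := \sum_(w <- words k) f w *: ee w.

Lemma P_lin k a f g : P k (fun w => a * f w + g w) = a *: P k f + P k g.
Proof.
rewrite /P scaler_sumr -big_split; apply: eq_bigr => w _.
by rewrite scalerA scalerDl.
Qed.

Lemma hn_P k f : hn (P k f) ^+ 2 = sq f (words k).
Proof. by rewrite hn_sq /P ortho // uniq_words. Qed.

Lemma hn_Pdiff k m f : (k <= m)%N ->
  hn (P m f - P k f) ^+ 2 = sq f (words m) - sq f (words k).
Proof.
move=> hkm; rewrite /P /sq (split_words _ _ _ _ hkm) [X in _ = X - _](split_words _ _ _ _ hkm).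
rewrite addrC addKr addrC addKr hn_sq ortho //.
exact: filter_uniq (uniq_words m).
Qed.

Lemma sum_sub (s t : seq W) (h : W -> R) : (forall w, 0 <= h w) -> uniq s -> uniq t ->
  {subset s <= t} -> \sum_(w <- s) h w <= \sum_(w <- t) h w.
Proof.
move=> h0 us ut st.
rewrite [X in _ <= X](bigID (fun w => w \in s)) /=.
have -> : \sum_(i <- t | i \in s) h i = \sum_(w <- s) h w.
  rewrite -big_filter; apply: perm_big; apply: uniq_perm => //.
    exact: filter_uniq.
  move=> w; rewrite mem_filter; apply/andP/idP => [[]//|hw]; split => //.
  exact: st.
by rewrite lerDl; apply: sumr_ge0 => w _.
Qed.

Lemma sq_mono k m f : (k <= m)%N -> sq f (words k) <= sq f (words m).
Proof.
move=> hkm; apply: sum_sub; [move=> w; exact: csq_ge0 | exact: uniq_words | exact: uniq_words |].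
by move=> w; rewrite !mem_words => h; exact: leq_trans hkm.
Qed.

Definition maxsize (s : seq W) := foldr (fun w k => maxn (size w) k) 0%N s.

Lemma maxsize_ge (s : seq W) w : w \in s -> (size w <= maxsize s)%N.
Proof.
elim: s => [|v s IH] //=; rewrite in_cons => /orP [/eqP ->|h].
  exact: leq_maxl.
exact: leq_trans (IH h) (leq_maxr _ _).
Qed.

Lemma approx_words f e : l2 f -> 0 < e -> exists K, l2norm f ^+ 2 - e < sq f (words K).
Proof.
move=> hf e0; have [s0 [us0 hs0]] := l2_approx f e hf e0.
exists (maxsize s0); apply: (lt_le_trans hs0).
apply: sum_sub; [move=> w; exact: csq_ge0 | exact: us0 | exact: uniq_words |].
by move=> w hw; rewrite mem_words; exact: maxsize_ge.
Qed.

Lemma P_cauchy f : l2 f -> cauchy (fun k => P k f).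
Proof.
move=> hf e e0.
have e2 : 0 < e ^+ 2 by rewrite exprn_gt0.
have [K hK] := approx_words f _ hf e2.
have main : forall k m, (K <= k)%N -> (k <= m)%N -> hn (P m f - P k f) < e.
  move=> k m hk hkm.
  have h1 := hn_Pdiff _ _ f hkm.
  have h2 := l2_le f (words m) hf (uniq_words m).
  have h3 := sq_mono _ _ f hk.
  have : hn (P m f - P k f) ^+ 2 < e ^+ 2 by lra.
  by rewrite ltr_pXn2r ?nnegrE ?hn_ge0 // ltW.
exists K => m k hm hk.
case: (leqP k m) => hkm.
  exact: main.
by rewrite hn_sub_sym; apply: main => //; exact: ltnW.
Qed.

Definition Xf f : H :=
  if pselect (exists l, conv (fun k => P k f) l) is left h then projT1 (cid h) else 0.

Lemma Xf_conv f l : conv (fun k => P k f) l -> Xf f = l.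
Proof.
rewrite /Xf; case: pselect => [h|h] c; last by exfalso; apply: h; exists l.
exact: (conv_uniq _ _ _ (projT2 (cid h)) c).
Qed.

Lemma Xf_P f : l2 f -> conv (fun k => P k f) (Xf f).
Proof.
move=> hf; have [l c] := complete _ (P_cauchy f hf).
by rewrite (Xf_conv f l c).
Qed.

Lemma Xf_lin a f g : l2 f -> l2 g -> Xf (fun w => a * f w + g w) = a *: Xf f + Xf g.
Proof.
move=> hf hg; apply: Xf_conv.
have := conv_add _ _ _ _ (conv_scale a _ _ (Xf_P f hf)) (Xf_P g hg).
by have -> : (fun k => P k (fun w => a * f w + g w)) = (fun k => a *: P k f + P k g)
  by apply: funext => k; exact: P_lin.
Qed.

Lemma Xf_norm f : l2 f -> hn (Xf f) = l2norm f.
Proof.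
move=> hf; have c := Xf_P f hf.
have hle : hn (Xf f) <= l2norm f.
  apply: (hn_lim_le _ _ _ c) => e e0; exists 0%N => k _.
  have : hn (P k f) ^+ 2 <= l2norm f ^+ 2.
    by rewrite hn_P; apply: l2_le => //; exact: uniq_words.
  rewrite ler_pXn2r ?nnegrE ?hn_ge0 ?l2norm_ge0 // => h.
  lra.
apply/eqP; rewrite eq_le hle /=.
have : l2norm f ^+ 2 <= hn (Xf f) ^+ 2.
  apply/ler_addgt0Pr => e e0.
  have [K hK] := approx_words f _ hf e0.
  have : Num.sqrt (sq f (words K)) <= hn (Xf f).
    apply: (hn_lim_ge2 _ _ _ K c) => k hk.
    rewrite /hnorm -/(q _) -hn_sq hn_P; apply: ler_wsqrtr.
    exact: sq_mono.
  move=> h; have : sq f (words K) <= hn (Xf f) ^+ 2.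
    rewrite -(sqr_sqrtr (sq_ge0 f (words K))).
    by rewrite ler_pXn2r ?nnegrE ?hn_ge0 ?sqrtr_ge0.
  lra.
by rewrite ler_pXn2r ?nnegrE ?hn_ge0 ?l2norm_ge0.
Qed.

Lemma P_S i k f : S i (P k f) = P k.+1 (Lcr i f).
Proof.
rewrite /P S_sum /= big_cons /= scale0r add0r big_allpairs_dep /=.
rewrite (bigD1_seq i) ?mem_enum ?enum_uniq //= [X in _ = _ + X]big1 ?addr0.
  apply: eq_bigr => w _; rewrite eqxx S_scale; done.
move=> j hj; apply: big1 => w _.
by rewrite (negbTE hj) scale0r.
Qed.

Lemma Xf_int i f : l2 f -> S i (Xf f) = Xf (Lcr i f).
Proof.
move=> hf; apply: esym; apply: Xf_conv; apply: conv_unshift.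
have := conv_map (S i) 1 _ _ (S_sub i) _ (Xf_P f hf).
have -> : (fun k => S i (P k f)) = (fun k => P k.+1 (Lcr i f)).
  by apply: funext => k; exact: P_S.
apply; by move=> x; rewrite S_hn mul1r.
Qed.

Lemma fwd : exists X, in_Xsigma hs S X /\ bounded_below hs X.
Proof.
exists Xf; split; first split.
- by move=> a f g hf hg; exact: Xf_lin.
- split.
    by exists 1 => f hf; rewrite Xf_norm // mul1r.
  by move=> i f hf; exact: Xf_int.
exists 1; split; first exact: ltr01.
by move=> f hf; rewrite mul1r Xf_norm.
Qed.

End Fwd.


End Rep.

End Hil.

Local Close Scope complex_scope.

Theorem corollary2p9 (R : realType) (n : nat) (H : lmodType R[i]) (hs : hilbert H)
  (S : 'I_n -> H -> H) :
  (2 <= n)%N -> En_rep hs S ->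
  ((exists eta : H, wandering hs S eta) <->
   (exists X : (seq 'I_n -> R[i]) -> H, in_Xsigma hs S X /\ bounded_below hs X)).
Proof.
move=> _ hS; split.
  by move=> [eta heta]; exact: (@fwd R H hs n S hS eta heta).
move=> [X [hX [c [c0 hc]]]].
exact: (@back_wander R H hs n S hS X hX c c0 hc).
Qed.
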